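(* Let $G$ be a finite group, $H\subseteq G$ a subgroup, $U=\mathrm{Ind}_H^G$ and $D=\mathrm{Res}^G_H$, and consider the operator $UD$ on $\mathrm{Cl}_{\mathbb{Z}}(G)$, represented as a matrix in the basis $\mathrm{Irr}(G)$. Let $k$ be an integer and define the class function $\phi$ on $G$ by $\phi(g)=\mathrm{Ind}_H^G(\mathbf{1}_H)(g)+k$. (ii) If $\phi$ is nonvanishing (equivalently $A:=UD+kI$ is nonsingular), then for all $\chi,\psi\in\mathrm{Irr}(G)$ the $(\chi,\psi)$-entry of the matrix of $A^{-1}$ is $A^{-1}_{\chi,\psi}=\langle \chi,\psi/\phi\rangle_G$ (and this also equals $\langle \chi\overline{\psi},1/\phi\rangle_G=\langle\chi/\phi,\psi\rangle_G=A^{-1}_{\psi,\chi}$). (iii) Let $s$ be the last diagonal entry of the Smith normal form over $\mathbb{Z}$ of $UD+kI$. Then $s=0$ when $UD+kI$ is singular, and when $UD+kI$ is nonsingular, $s$ (up to sign) is the smallest positive integer $s$ such that the class function $s\cdot\frac{1}{\phi}$ lies in $\mathrm{Cl}_{\mathbb{Z}}(G)$.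
   Context: $\mathrm{Cl}_{\mathbb{Z}}(G)$ denotes the $\mathbb{Z}$-module of virtual characters of $G$, i.e. class functions that are $\mathbb{Z}$-linear combinations of the complex irreducible characters $\mathrm{Irr}(G)$. $\mathbf{1}_H$ is the trivial character of $H$. The inner product of class functions is $\langle\alpha,\beta\rangle_G=\frac{1}{|G|}\sum_{g\in G}\alpha(g)\overline{\beta(g)}$. The Smith normal form over $\mathbb{Z}$ of an integer matrix $B$ is the diagonal matrix $PBQ$ ($P,Q$ unimodular) with diagonal entries $s_1\mid s_2\mid\cdots$. *)

(* Defs.v *)
From HB Require Import structures.
From mathcomp Require Import all_boot all_order all_algebra all_fingroup all_solvable all_field all_character.
Set Implicit Arguments. Unset Strict Implicit. Unset Printing Implicit Defensive.
Import Order.TTheory GRing.Theory Num.Theory.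
Local Open Scope ring_scope.

(* Matrix of the operator UD = Ind_H^G o Res^G_H on Cl_Z(G) in the basis Irr(G):
   the (chi_i, chi_j) entry is the coefficient of chi_i in UD(chi_j),
   i.e. '[Ind (Res chi_j), chi_i]. *)
Definition UDmx (gT : finGroupType) (G H : {group gT}) : 'M[algC]_(Nirr G) :=
  \matrix_(i, j) '[ 'Ind[G, H] ('Res[H, G] 'chi[G]_j), 'chi[G]_i ].

Definition UDkmx (gT : finGroupType) (G H : {group gT}) (k : int) :
  'M[algC]_(Nirr G) := UDmx G H + (k%:~R)%:M.

Definition phiUD (gT : finGroupType) (G H : {group gT}) (k : int) : 'CF(G) :=
  'Ind[G, H] 1 + (k%:~R : algC)%:A.

Definition in_ClZ (gT : finGroupType) (G : {group gT}) (f : 'CF(G)) : Prop :=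
  exists z : Iirr G -> int, f = \sum_i 'chi[G]_i *~ z i.

Definition Smith_form n (B D : 'M[int]_n) : Prop :=
  exists P Q : 'M[int]_n,
    [/\ P \in unitmx, Q \in unitmx, D = P *m B *m Q, is_diag_mx D &
        forall i j : 'I_n, (i <= j)%N -> (D i i %| D j j)%Z].

(* Main.v *)
Require Import Defs.
From HB Require Import structures.
From mathcomp Require Import all_boot all_order all_algebra all_fingroup all_solvable all_field all_character.
Import Order.TTheory GRing.Theory Num.Theory.
Local Open Scope ring_scope.
Lemma diag_eq n (D : 'M[int]_n) : is_diag_mx D -> D = diag_mx (\row_l D l l).
Proof.
move/is_diag_mxP=> dD; apply/matrixP => a b; rewrite !mxE.
have [->|nab] := eqVneq a b; first by rewrite mulr1n.
by rewrite mulr0n dD //; apply: contra nab => /eqP/val_inj ->.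
Qed.

Lemma snf_a n (B D P Q : 'M[int]_n) (i : 'I_n) :
  P \in unitmx -> Q \in unitmx -> D = P *m B *m Q -> is_diag_mx D ->
  (forall l, (D l l %| D i i)%Z) ->
  exists W, B *m W = (`|D i i|%:Z)%:M.
Proof.
move=> uP uQ eD dD dv; set c := (`|D i i|%:Z).
pose E : 'M[int]_n := diag_mx (\row_l (c %/ D l l)%Z).
have eDE : D *m E = c%:M.
  rewrite {1}(@diag_eq _ D dD) mulmx_diag -diag_const_mx; congr diag_mx.
  apply/rowP => l; rewrite !mxE mulrC divzK //.
  by apply: (dvdz_trans (dv l)); rewrite dvdzE /= dvdnn.
exists (Q *m E *m P).
have h : P *m (B *m (Q *m E *m P)) = P *m c%:M.
  by rewrite !mulmxA -eD eDE scalar_mxC.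
by rewrite -[LHS](mulKmx uP) h mulKmx.
Qed.

Lemma snf_b n (B D P Q W : 'M[int]_n) (i : 'I_n) (m : int) :
  P \in unitmx -> Q \in unitmx -> D = P *m B *m Q -> is_diag_mx D ->
  B *m W = m%:M -> (D i i %| m)%Z.
Proof.
move=> uP uQ eD dD eW.
have e : D *m (invmx Q *m W *m invmx P) = m%:M.
  rewrite eD -!mulmxA (mulmxA Q (invmx Q)) mulmxV // mul1mx (mulmxA B) eW.
  by rewrite -scalar_mxC mulmxA mulmxV // mul1mx.
move/matrixP/(_ i i): e; rewrite {1}(@diag_eq _ D dD) mul_diag_mx !mxE eqxx mulr1n => <-.
by apply: dvdz_mulr; apply: dvdzz.
Qed.

Definition Mf {gT : finGroupType} {G : {group gT}} (f : 'CF(G)) : 'M[algC]_(Nirr G) :=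
  \matrix_(i, j) '[ 'chi[G]_j * f, 'chi[G]_i ].

Lemma MfE (gT : finGroupType) (G : {group gT}) (f : 'CF(G)) i j :
  Mf f i j = '[ 'chi[G]_j * f, 'chi[G]_i ].
Proof. by rewrite mxE. Qed.

Lemma Mf_mul (gT : finGroupType) (G : {group gT}) (f g : 'CF(G)) :
  Mf f *m Mf g = Mf (f * g).
Proof.
apply/matrixP => i j; rewrite !mxE.
rewrite (mulrC f g) (mulrA _ g f).
rewrite [X in '[X * _, _]](cfun_sum_cfdot ('chi_j * g)) mulr_suml cfdot_suml.
apply: eq_bigr => l _; rewrite !MfE -scalerAl cfdotZl mulrC; congr (_ * _).
Qed.

Lemma Mf1 (gT : finGroupType) (G : {group gT}) : Mf (1 : 'CF(G)) = 1%:M.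
Proof.
by apply/matrixP => i j; rewrite !(mxE, MfE) mulr1 cfdot_irr eq_sym.
Qed.

Lemma MfZ (gT : finGroupType) (G : {group gT}) (a : algC) (f : 'CF(G)) :
  Mf (a *: f) = a *: Mf f.
Proof. by apply/matrixP => i j; rewrite !(mxE, MfE) -scalerAr cfdotZl. Qed.

Lemma UDkmxE (gT : finGroupType) (G H : {group gT}) (k : int) :
  H \subset G -> UDkmx G H k = Mf (phiUD G H k).
Proof.
move=> sHG; apply/matrixP => i j; rewrite !(mxE, MfE) /phiUD mulrDr cfdotDl.
rewrite mulr_algr cfdotZl cfdot_irr eq_sym mulr_natr; congr (_ + _).
by rewrite -['Res _]mul1r cfIndM // mulrC.
Qed.

Lemma UDkmx_sym (gT : finGroupType) (G H : {group gT}) (k : int) :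
  H \subset G -> (UDkmx G H k)^T = UDkmx G H k.
Proof.
move=> sHG; apply/matrixP => i j; rewrite !(mxE, MfE) eq_sym; congr (_ + _).
have ch l : 'Ind[G, H] ('Res[H, G] 'chi[G]_l) \is a character.
  by rewrite cfInd_char ?cfRes_char ?irr_char.
rewrite cfdotC_char ?irr_char // -cfdot_Res_l cfdotC_char ?cfRes_char ?irr_char //.
by rewrite cfdot_Res_l -cfdotC_char ?irr_char.
Qed.

Lemma phi_conj (gT : finGroupType) (G H : {group gT}) (k : int) :
  ((phiUD G H k)^*)%CF = phiUD G H k.
Proof.
rewrite /phiUD rmorphD /= cfAutInd cfAut_cfun1 cfAutZ_Cint ?rpred_int //.
by rewrite cfAut_cfun1.
Qed.

Lemma phi_real (gT : finGroupType) (G H : {group gT}) (k : int) x :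
  ((phiUD G H k) x)^* = phiUD G H k x.
Proof. by rewrite -cfConjCE phi_conj. Qed.

Lemma cfunit_iff (gT : finGroupType) (G : {group gT}) (f : 'CF(G)) :
  (forall g, g \in G -> f g != 0) <-> f \is a GRing.unit.
Proof.
rewrite qualifE /GRing.unit /= genGid.
split=> [h | h g Gg]; first by apply/forall_inP.
by move/forall_inP: h; apply.
Qed.

Lemma cfinvE (gT : finGroupType) (G : {group gT}) (f : 'CF(G)) x :
  f \is a GRing.unit -> x \in G -> f^-1 x = (f x)^-1.
Proof.
move=> Uf Gx; have := mulVr Uf; move/cfunP/(_ x); rewrite !cfunE cfun1E Gx => e.
have nz : f x != 0 by move/cfunit_iff: Uf; apply.
by rewrite -[f^-1 x](mulfK nz) e mul1r.
Qed.

Lemma cfdot_real (gT : finGroupType) (G : {group gT}) (a b p : 'CF(G)) :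
  (forall x, x \in G -> (p x)^* = p x) ->
  '[a * p, b] = '[a, b * p] /\ '[a * p, b] = '[a * (b^*)%CF, p].
Proof.
move=> rp; rewrite !cfdotE; split; congr (_ * _); apply: eq_bigr => x Gx;
  rewrite !cfunE.
  by rewrite rmorphM /= rp // mulrA mulrAC.
by rewrite rp // mulrAC.
Qed.

Lemma part_inv (gT : finGroupType) (G H : {group gT}) (k : int) :
  H \subset G -> phiUD G H k \is a GRing.unit ->
  UDkmx G H k \in unitmx /\ invmx (UDkmx G H k) = Mf (phiUD G H k)^-1.
Proof.
move=> sHG Uf; have e : UDkmx G H k *m Mf (phiUD G H k)^-1 = 1%:M.
  by rewrite UDkmxE // Mf_mul mulrV // Mf1.
have [uA _] := mulmx1_unit e; split => //.
by rewrite -[RHS](mulKmx uA) e mulmx1.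
Qed.

Lemma part_unit (gT : finGroupType) (G H : {group gT}) (k : int) :
  H \subset G -> UDkmx G H k \in unitmx -> phiUD G H k \is a GRing.unit.
Proof.
move=> sHG uA; set phi := phiUD G H k.
pose X := invmx (UDkmx G H k).
have e : UDkmx G H k *m X = 1%:M by rewrite mulmxV.
pose psi := \sum_l X l 0 *: 'chi[G]_l.
have e2 : psi * phi = 1.
  rewrite (cfun_sum_cfdot (psi * phi)) [RHS](cfun_sum_cfdot 1).
  apply: eq_bigr => i _; congr (_ *: _).
  rewrite -irr0 cfdot_irr eq_sym.
  have -> : ((i == 0)%:R : algC) = (1%:M : 'M[algC]_(Nirr G)) i 0 by rewrite mxE.
  rewrite -e UDkmxE // mxE mulr_suml cfdot_suml; apply: eq_bigr => l _.
  by rewrite MfE -scalerAl cfdotZl mulrC.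
apply/cfunit_iff => g Gg; apply/negP => /eqP z.
move/cfunP/(_ g): e2; rewrite [LHS]cfunE z mulr0 cfun1E Gg.
by move/eqP; rewrite eq_sym oner_eq0.
Qed.


Lemma part_ii (gT : finGroupType) (G H : {group gT}) (k : int) :
  H \subset G ->
  (forall g, g \in G -> phiUD G H k g != 0) ->
    forall i j : Iirr G,
      [/\ invmx (UDkmx G H k) i j = '[ 'chi[G]_i, 'chi[G]_j * (phiUD G H k)^-1 ],
          invmx (UDkmx G H k) i j
            = '[ 'chi[G]_i * ('chi[G]_j)^*%CF, (phiUD G H k)^-1 ],
          invmx (UDkmx G H k) i j = '[ 'chi[G]_i * (phiUD G H k)^-1, 'chi[G]_j ] &
          invmx (UDkmx G H k) i j = invmx (UDkmx G H k) j i].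
Proof.
move=> sHG /cfunit_iff Uf i j.
have [uA eI] := @part_inv gT G H k sHG Uf.
have sym : invmx (UDkmx G H k) i j = invmx (UDkmx G H k) j i.
  have t : (invmx (UDkmx G H k))^T = invmx (UDkmx G H k).
    by rewrite trmx_inv UDkmx_sym.
  by rewrite -{1}t mxE.
have rp : forall x, x \in G -> (((phiUD G H k)^-1) x)^* = ((phiUD G H k)^-1) x.
  by move=> x Gx; rewrite cfinvE // fmorphV /= phi_real.
have [r1 r2] := @cfdot_real gT G 'chi[G]_i 'chi[G]_j _ rp.
have e3 : invmx (UDkmx G H k) i j = '[ 'chi[G]_i * (phiUD G H k)^-1, 'chi[G]_j ].
  by rewrite sym eI MfE.
by split => //; rewrite e3.
Qed.

Lemma part_iii (gT : finGroupType) (G H : {group gT}) (k : int) :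
  H \subset G ->
  (forall B D : 'M[int]_(Nirr G),
     map_mx intr B = UDkmx G H k -> Smith_form B D ->
     forall i : Iirr G, (i.+1 = Nirr G)%N ->
       (UDkmx G H k \notin unitmx -> D i i = 0) /\
       (UDkmx G H k \in unitmx ->
          (0 < `|D i i|)%N /\
          in_ClZ (`|D i i|%:R *: (phiUD G H k)^-1) /\
          forall m : nat, (0 < m < `|D i i|)%N ->
            ~ in_ClZ (m%:R *: (phiUD G H k)^-1))).
Proof.
move=> sHG B D hB [P [Q [uP uQ eD dD dv]]] i hi.
set A := UDkmx G H k in hB *.
have detA : \det A = (\det B)%:~R by rewrite -hB det_map_mx.
have uAB : (A \in unitmx) = (\det B != 0) by rewrite unitmxE unitfE detA intr_eq0.
have detD : \det D = \det P * \det B * \det Q by rewrite eD !det_mulmx.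
have detDp : \det D = \prod_l D l l by rewrite det_trig // is_diag_mx_is_trig.
have dvi : forall l, (D l l %| D i i)%Z by move=> l; apply: dv; rewrite -ltnS hi.
split.
  rewrite uAB negbK => /eqP dB0.
  have : \det D = 0 by rewrite detD dB0 mulr0 mul0r.
  rewrite detDp => /eqP/prodf_eq0 [l _ /eqP Dl0].
  by move: (dvi l); rewrite Dl0 dvd0z => /eqP.
move=> uA.
have dB : \det B != 0 by rewrite -uAB.
have nzu (M : 'M[int]_(Nirr G)) : M \in unitmx -> \det M != 0.
  by move=> uM; apply: contraTneq uM => h; rewrite unitmxE h unitr0.
have Dii : D i i != 0.
  have : \det D != 0 by rewrite detD !mulf_neq0 // nzu.
  by rewrite detDp => /prodf_neq0; apply.
split; first by rewrite absz_gt0.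
have Uf := @part_unit gT G H k sHG uA.
have [_ eI] := @part_inv gT G H k sHG Uf.
split.
  have [W hW] := @snf_a _ B D P Q i uP uQ eD dD dvi.
  set c : algC := `|D i i|%:R.
  have e : A *m map_mx intr W = c%:M by rewrite -hB -map_mxM hW map_scalar_mx.
  have eW : map_mx intr W = Mf (c *: (phiUD G H k)^-1).
    rewrite MfZ -eI -[LHS](mulKmx uA) e -scalemx1 -scalemxAr mulmx1.
    by [].
  exists (fun l => W l (0 : Iirr G)); rewrite [LHS]cfun_sum_cfdot; apply: eq_bigr => l _.
  rewrite -scaler_int; congr (_ *: _).
  have := congr1 (fun M : 'M_(Nirr G) => M l (0 : Iirr G)) eW; rewrite /= mxE MfE irr0 mul1r => <-.
  by [].
move=> m /andP[m0 mlt] [z hz].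
have Zm : m%:R *: (phiUD G H k)^-1 \in 'Z[irr G]%g.
  by rewrite hz rpred_sum // => l _; rewrite rpredMz ?irr_vchar.
pose W := \matrix_(a, b) Num.floor (Mf (m%:R *: (phiUD G H k)^-1) a b).
have hW : map_mx intr W = Mf (m%:R *: (phiUD G H k)^-1).
  apply/matrixP => a b; rewrite mxE [W a b]mxE floorK //.
  by rewrite MfE Cint_cfdot_vchar_irr // rpredM // irr_vchar.
have eBW : B *m W = (m%:Z)%:M.
  have h : map_mx (intr : int -> algC) (B *m W) = map_mx (intr : int -> algC) ((m%:Z)%:M : 'M[int]_(Nirr G)).
    rewrite map_mxM hB hW MfZ -eI -scalemxAr mulmxV // scalemx1 map_scalar_mx.
    by [].
  apply/matrixP => a b; move/matrixP/(_ a b): h; rewrite !mxE.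
  by move/(@intr_inj algC).
have := @snf_b _ B D P Q W i m%:Z uP uQ eD dD eBW.
rewrite dvdzE /= => /(dvdn_leq m0).
by rewrite leqNgt mlt.
Qed.
Theorem proposition6p9 (gT : finGroupType) (G H : {group gT}) (k : int) :
  H \subset G ->
  (* phi nonvanishing on G iff A = UD + kI nonsingular *)
  ((forall g, g \in G -> phiUD G H k g != 0) <-> UDkmx G H k \in unitmx) /\
  (* (ii) *)
  ((forall g, g \in G -> phiUD G H k g != 0) ->
    forall i j : Iirr G,
      [/\ invmx (UDkmx G H k) i j = '[ 'chi[G]_i, 'chi[G]_j * (phiUD G H k)^-1 ],
          invmx (UDkmx G H k) i j
            = '[ 'chi[G]_i * ('chi[G]_j)^*%CF, (phiUD G H k)^-1 ],
          invmx (UDkmx G H k) i j = '[ 'chi[G]_i * (phiUD G H k)^-1, 'chi[G]_j ] &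
          invmx (UDkmx G H k) i j = invmx (UDkmx G H k) j i]) /\
  (* (iii) *)
  (forall B D : 'M[int]_(Nirr G),
     map_mx intr B = UDkmx G H k -> Smith_form B D ->
     forall i : Iirr G, (i.+1 = Nirr G)%N ->
       (UDkmx G H k \notin unitmx -> D i i = 0) /\
       (UDkmx G H k \in unitmx ->
          (0 < `|D i i|)%N /\
          in_ClZ (`|D i i|%:R *: (phiUD G H k)^-1) /\
          forall m : nat, (0 < m < `|D i i|)%N ->
            ~ in_ClZ (m%:R *: (phiUD G H k)^-1))).
Proof.
move=> sHG; split; last split.
- split.
    by move/cfunit_iff => Uf; case: (@part_inv gT G H k sHG Uf).
  by move=> uA; apply/cfunit_iff; exact: (@part_unit gT G H k sHG uA).
- exact: (@part_ii gT G H k sHG).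
- exact: (@part_iii gT G H k sHG).
Qed.
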